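(* Let $d=1$ and $x,y\in\mathbb{R}$. If $1,x,y$ are linearly dependent over $\mathbb{Q}$ and $x$ or $y$ is irrational, then $(x,y)\notin\Pi$.
   Context: For $t\in\mathbb{R}$, $\|t\|$ is the distance from $t$ to $\mathbb{Z}$. Write $\mathbb{N}=\{1,2,\dots\}$. $\mathcal{D}$ is the set of all non-increasing $\psi:\mathbb{N}\to\mathbb{R}_{\ge0}$ with $\sum_n\psi(n)=\infty$. $W(\psi)$ is the set of $(x,y)\in\mathbb{R}^2$ with $\|nx+y\|<\psi(n)$ for infinitely many $n\in\mathbb{N}$, and $\Pi=\bigcap_{\psi\in\mathcal{D}}W(\psi)$. *)

(* Defs.v *)
From Stdlib Require Import Reals QArith Qreals.
Open Scope R_scope.

(* ||t|| = distance from t to Z.  Int_part t = up t - 1 = floor t. *)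
Definition distZ (t : R) : R :=
  Rmin (t - IZR (Int_part t)) (IZR (Int_part t) + 1 - t).

(* The class D: psi : N -> R_{>=0} (N = {1,2,...}), non-increasing, with
   divergent sum.  psi is represented as a function nat -> R whose value at 0
   is irrelevant (never used). *)
Definition in_D (psi : nat -> R) : Prop :=
  (forall n : nat, (1 <= n)%nat -> 0 <= psi n) /\
  (forall n : nat, (1 <= n)%nat -> psi (S n) <= psi n) /\
  (forall M : R, exists N : nat, M < sum_f_R0 (fun k => psi (S k)) N).

Definition in_W (psi : nat -> R) (x y : R) : Prop :=
  forall N : nat, exists n : nat,
    (N <= n)%nat /\ (1 <= n)%nat /\ distZ (INR n * x + y) < psi n.

Definition in_Pi (x y : R) : Prop :=
  forall psi : nat -> R, in_D psi -> in_W psi x y.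

Definition Q_lin_dep3 (x y : R) : Prop :=
  exists a b c : Q, ~ (a == 0 /\ b == 0 /\ c == 0)%Q /\
    Q2R a + Q2R b * x + Q2R c * y = 0.

Definition irrational (x : R) : Prop := ~ exists q : Q, x = Q2R q.

(* Main.v *)
Require Import Defs.
From Stdlib Require Import Reals QArith Qreals Lra Lia Psatz ZArith.
Open Scope R_scope.

Record St := mkSt { su : nat; sv : nat; sa : R; sb : R }.

Definition step (s : St) : St :=
  if Rlt_dec (sb s) (sa s) then mkSt (su s + sv s) (sv s) (sa s - sb s) (sb s)
  else mkSt (su s) (su s + sv s) (sa s) (sb s - sa s).

Definition init (x : R) : St :=
  mkSt 1 1 (x - IZR (Int_part x)) (1 - (x - IZR (Int_part x))).

Definition st (x : R) (n : nat) : St := Nat.iter n step (init x).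

Definition Inv (x : R) (s : St) : Prop :=
  (1 <= su s)%nat /\ (1 <= sv s)%nat /\ 0 < sa s /\ 0 < sb s /\
  sa s * INR (sv s) + sb s * INR (su s) = 1 /\
  (exists p, INR (su s) * x - IZR p = sa s) /\
  (exists p, INR (sv s) * x - IZR p = - sb s) /\
  (forall (m : nat) (z : Z), (1 <= m)%nat -> (m < su s + sv s)%nat ->
      ~ (- sb s < INR m * x - IZR z < sa s)).

Lemma irr_nz (x : R) : irrational x -> forall (m : nat) (z : Z), (1 <= m)%nat ->
  INR m * x - IZR z <> 0.
Proof.
  intros H m z Hm E. apply H. exists (z # Z.to_pos (Z.of_nat m)).
  unfold Q2R; simpl. rewrite Z2Pos.id by lia. rewrite <- INR_IZR_INZ.
  assert (0 < INR m) by (apply lt_0_INR; lia).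
  replace (IZR z) with (INR m * x) by lra. field. lra.
Qed.

Lemma int_between (z : Z) (a : R) : 0 < a -> a <= 1 -> - a < IZR z < 0 -> False.
Proof.
  intros Ha Ha1 [h1 h2]. apply lt_IZR in h2. assert (-1 < IZR z) by lra.
  apply lt_IZR in H. lia.
Qed.

Lemma int_between' (z : Z) (a : R) : 0 < a -> a <= 1 -> 0 < IZR z < a -> False.
Proof.
  intros Ha Ha1 [h1 h2]. apply lt_IZR in h1. assert (IZR z < 1) by lra.
  apply lt_IZR in H. lia.
Qed.

Lemma Inv_init (x : R) : irrational x -> Inv x (init x).
Proof.
  intros Hx. unfold Inv, init; simpl.
  destruct (base_Int_part x) as [h1 h2]. set (p := Int_part x) in *.
  assert (Hne : x - IZR p <> 0).
  { intro E. apply (irr_nz x Hx 1 p); [lia|]. simpl. lra. }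
  repeat split; try lia.
  all: try lra.
  - exists p. ring.
  - exists (p + 1)%Z. rewrite plus_IZR. ring.
  - intros m z Hm1 Hm2 [k1 k2]. assert (m = 1%nat) by lia. subst m. simpl in *.
    assert (IZR p < IZR z) by lra. assert (IZR z < IZR p + 1) by lra.
    apply lt_IZR in H. rewrite <- plus_IZR in H0. apply lt_IZR in H0. lia.
Qed.

Lemma Inv_step (x : R) (s : St) : irrational x -> Inv x s -> Inv x (step s).
Proof.
  intros Hx [Hu [Hv [Ha [Hb [Hd [[p Hp] [[q Hq] Hg]]]]]]].
  destruct s as [u v a b]; simpl in *.
  assert (Iu : 1 <= INR u) by (apply (le_INR 1); lia).
  assert (Iv : 1 <= INR v) by (apply (le_INR 1); lia).
  assert (Ha1 : a < 1) by nra.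
  assert (Hb1 : b < 1) by nra.
  unfold step, Inv; simpl. destruct (Rlt_dec b a) as [Hba|Hba]; simpl.
  - repeat split; try lia; try lra.
    + rewrite plus_INR. rewrite <- Hd. ring.
    + exists (p + q)%Z. rewrite plus_INR, plus_IZR. lra.
    + exists q. exact Hq.
    + intros m z Hm1 Hm2 [k1 k2].
      destruct (Nat.lt_ge_cases m (u + v)) as [Hlt|Hge].
      * apply (Hg m z Hm1 Hlt). lra.
      * destruct (Nat.eq_dec m (u + v)) as [Heq|Hneq].
        -- subst m. rewrite plus_INR in *.
           apply (int_between (p + q - z) a); try lra.
           rewrite !minus_IZR, plus_IZR. lra.
        -- assert (Hm' : (1 <= m - v)%nat) by lia.
           apply (Hg (m - v)%nat (z - q)%Z Hm' ltac:(lia)).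
           rewrite minus_INR by lia. rewrite minus_IZR. lra.
  - assert (Hab : a <> b).
    { intro E. apply (irr_nz x Hx (u + v) (p + q)); [lia|].
      rewrite plus_INR, plus_IZR. lra. }
    repeat split; try lia; try lra.
    + rewrite plus_INR. rewrite <- Hd. ring.
    + exists p. exact Hp.
    + exists (p + q)%Z. rewrite plus_INR, plus_IZR. lra.
    + intros m z Hm1 Hm2 [k1 k2].
      destruct (Nat.lt_ge_cases m (u + v)) as [Hlt|Hge].
      * apply (Hg m z Hm1 Hlt). lra.
      * destruct (Nat.eq_dec m (u + v)) as [Heq|Hneq].
        -- subst m. rewrite plus_INR in *.
           apply (int_between' (p + q - z) b); try lra.
           rewrite !minus_IZR, plus_IZR. lra.
        -- assert (Hm' : (1 <= m - u)%nat) by lia.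
           apply (Hg (m - u)%nat (z - p)%Z Hm' ltac:(lia)).
           rewrite minus_INR by lia. rewrite minus_IZR. lra.
Qed.

Lemma Inv_st (x : R) : irrational x -> forall n, Inv x (st x n).
Proof.
  intros Hx n; induction n.
  - apply Inv_init; auto.
  - change (st x (S n)) with (step (st x n)). apply Inv_step; auto.
Qed.

Definition NN (x : R) (n : nat) : nat := (su (st x n) + sv (st x n))%nat.
Definition cc (x : R) (n : nat) : R := Rmin (sa (st x n)) (sb (st x n)).

Lemma st_S (x : R) n : st x (S n) = step (st x n).
Proof. reflexivity. Qed.

Lemma NN_grow (x : R) : irrational x -> forall n, (n + 2 <= NN x n)%nat.
Proof.
  intros Hx n; induction n.
  - unfold NN; simpl. lia.
  - unfold NN in *. rewrite st_S.
    destruct (Inv_st x Hx n) as [Hu [Hv _]].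
    destruct (st x n) as [u v a b]; simpl in *.
    unfold step; simpl; destruct (Rlt_dec b a); simpl; lia.
Qed.

Lemma cc_pos (x : R) : irrational x -> forall n, 0 < cc x n.
Proof.
  intros Hx n. destruct (Inv_st x Hx n) as [_ [_ [Ha [Hb _]]]].
  unfold cc, Rmin; destruct Rle_dec; lra.
Qed.

Lemma cc_dec (x : R) : irrational x -> forall n, cc x (S n) <= cc x n.
Proof.
  intros Hx n. unfold cc. rewrite st_S.
  destruct (Inv_st x Hx n) as [_ [_ [Ha [Hb _]]]].
  destruct (st x n) as [u v a b]; simpl in *.
  unfold step; simpl; destruct (Rlt_dec b a); simpl;
  unfold Rmin; repeat destruct Rle_dec; lra.
Qed.

Lemma cc_gap (x : R) : irrational x -> forall n (L : nat) (z : Z),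
  (1 <= L)%nat -> (L < NN x n)%nat -> cc x n <= Rabs (INR L * x - IZR z).
Proof.
  intros Hx n L z H1 H2. destruct (Inv_st x Hx n) as [_ [_ [Ha [Hb [_ [_ [_ Hg]]]]]]].
  unfold NN, cc in *. destruct (Rle_lt_dec (Rmin (sa (st x n)) (sb (st x n))) (Rabs (INR L * x - IZR z))) as [h|h]; auto.
  exfalso. apply (Hg L z H1 H2). apply Rabs_def2 in h. destruct h as [h3 h4].
  unfold Rmin in *; destruct Rle_dec; split; lra.
Qed.

Lemma nat_arch (r : R) : exists k : nat, r < INR k.
Proof.
  destruct (archimed r) as [h1 _]. exists (Z.to_nat (up r)).
  rewrite INR_IZR_INZ, ZifyInst.of_nat_to_nat_eq.
  assert (IZR (up r) <= IZR (Z.max 0 (up r))) by (apply IZR_le; lia). lra.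
Qed.

Lemma bal_ind (x : R) : irrational x -> forall (k n : nat),
  sa (st x n) < INR k * sb (st x n) -> sb (st x n) < INR k * sa (st x n) ->
  exists m, (n <= m)%nat /\
    ((sb (st x m) < sa (st x m) < 2 * sb (st x m)) \/
     (sa (st x m) <= sb (st x m) < 2 * sa (st x m))).
Proof.
  intros Hx k. induction k; intros n h1 h2.
  - destruct (Inv_st x Hx n) as [_ [_ [Ha [Hb _]]]]. simpl in h1. lra.
  - destruct (Inv_st x Hx n) as [_ [_ [Ha [Hb _]]]].
    rewrite S_INR in h1, h2.
    destruct (Rlt_dec (sb (st x n)) (sa (st x n))) as [hba|hba].
    + destruct (Rlt_dec (sa (st x n)) (2 * sb (st x n))) as [h3|h3].
      * exists n. split; [lia|]. left; lra.
      * destruct (IHk (S n)) as [m [hm1 hm2]].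
        -- rewrite st_S. unfold step. destruct (Rlt_dec (sb (st x n)) (sa (st x n))); [|lra].
           simpl. lra.
        -- rewrite st_S. unfold step. destruct (Rlt_dec (sb (st x n)) (sa (st x n))); [|lra].
           simpl. nra.
        -- exists m. split; [lia|auto].
    + destruct (Rlt_dec (sb (st x n)) (2 * sa (st x n))) as [h3|h3].
      * exists n. split; [lia|]. right; lra.
      * destruct (IHk (S n)) as [m [hm1 hm2]].
        -- rewrite st_S. unfold step. destruct (Rlt_dec (sb (st x n)) (sa (st x n))); [lra|].
           simpl. nra.
        -- rewrite st_S. unfold step. destruct (Rlt_dec (sb (st x n)) (sa (st x n))); [lra|].
           simpl. lra.
        -- exists m. split; [lia|auto].
Qed.

Lemma balanced (x : R) : irrational x -> forall n, exists m, (n <= m)%nat /\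
  1 / 2 <= INR (NN x m) * cc x m.
Proof.
  intros Hx n. destruct (Inv_st x Hx n) as [_ [_ [Ha [Hb _]]]].
  destruct (nat_arch (sa (st x n) / sb (st x n) + sb (st x n) / sa (st x n))) as [k hk].
  assert (e1 : sa (st x n) / sb (st x n) < INR k).
  { assert (0 < sb (st x n) / sa (st x n)) by (apply Rdiv_lt_0_compat; lra). lra. }
  assert (e2 : sb (st x n) / sa (st x n) < INR k).
  { assert (0 < sa (st x n) / sb (st x n)) by (apply Rdiv_lt_0_compat; lra). lra. }
  assert (f1 : sa (st x n) < INR k * sb (st x n)).
  { replace (sa (st x n)) with (sa (st x n) / sb (st x n) * sb (st x n)) at 1 by (field; lra).
    apply Rmult_lt_compat_r; lra. }
  assert (f2 : sb (st x n) < INR k * sa (st x n)).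
  { replace (sb (st x n)) with (sb (st x n) / sa (st x n) * sa (st x n)) at 1 by (field; lra).
    apply Rmult_lt_compat_r; lra. }
  destruct (bal_ind x Hx k n f1 f2) as [m [hm hb]].
  exists m. split; auto.
  destruct (Inv_st x Hx m) as [Hu [Hv [Ha' [Hb' [Hd _]]]]].
  unfold NN, cc. rewrite plus_INR.
  assert (Iu : 1 <= INR (su (st x m))) by (apply (le_INR 1); lia).
  assert (Iv : 1 <= INR (sv (st x m))) by (apply (le_INR 1); lia).
  unfold Rmin; destruct Rle_dec; destruct hb; nra.
Qed.

Definition term (x : R) (L j : nat) : R := if Nat.ltb L (NN x j) then cc x j else 0.

Fixpoint mx (x : R) (L k : nat) : R :=
  match k with
  | O => term x L 0
  | S k' => Rmax (mx x L k') (term x L (S k'))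
  end.

Definition psi0 (x : R) (L : nat) : R := mx x L L.

Lemma term_nonneg (x : R) : irrational x -> forall L j, 0 <= term x L j.
Proof.
  intros Hx L j. unfold term. destruct (Nat.ltb L (NN x j)).
  - left; apply cc_pos; auto.
  - lra.
Qed.

Lemma mx_ge (x : R) L : forall k j, (j <= k)%nat -> term x L j <= mx x L k.
Proof.
  induction k; intros j hj.
  - assert (j = 0%nat) by lia. subst. simpl. lra.
  - simpl. destruct (Nat.eq_dec j (S k)).
    + subst. apply Rmax_r.
    + eapply Rle_trans; [apply IHk; lia| apply Rmax_l].
Qed.

Lemma mx_is (x : R) L : forall k, exists j, (j <= k)%nat /\ mx x L k = term x L j.
Proof.
  induction k.
  - exists 0%nat. split; auto.
  - simpl. apply (Rmax_case (mx x L k) (term x L (S k))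
      (fun r => exists j, (j <= S k)%nat /\ r = term x L j)).
    + destruct IHk as [j [h1 h2]]. exists j. split; auto.
    + exists (S k). split; auto.
Qed.

Lemma psi0_nonneg (x : R) : irrational x -> forall L, 0 <= psi0 x L.
Proof.
  intros Hx L. unfold psi0. eapply Rle_trans; [apply (term_nonneg x Hx L 0)|].
  apply mx_ge; lia.
Qed.

Lemma psi0_gap (x : R) : irrational x -> forall (L : nat) (z : Z),
  (1 <= L)%nat -> psi0 x L <= Rabs (INR L * x - IZR z).
Proof.
  intros Hx L z hL. unfold psi0. destruct (mx_is x L L) as [j [hj ->]].
  unfold term. destruct (Nat.ltb L (NN x j)) eqn:E.
  - apply Nat.ltb_lt in E. apply cc_gap; auto.
  - apply Rabs_pos.
Qed.

Lemma psi0_big (x : R) : irrational x -> forall n L,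
  (n <= L)%nat -> (L < NN x n)%nat -> cc x n <= psi0 x L.
Proof.
  intros Hx n L h1 h2. unfold psi0.
  replace (cc x n) with (term x L n).
  - apply mx_ge; auto.
  - unfold term. apply Nat.ltb_lt in h2. rewrite h2. reflexivity.
Qed.

Lemma psi0_step (x : R) : irrational x -> forall L, psi0 x (S L) <= psi0 x L.
Proof.
  intros Hx L. unfold psi0 at 1. destruct (mx_is x (S L) (S L)) as [j [hj ->]].
  unfold term. destruct (Nat.ltb (S L) (NN x j)) eqn:E.
  - apply Nat.ltb_lt in E. destruct (Nat.eq_dec j (S L)).
    + subst j. eapply Rle_trans; [apply cc_dec; auto|].
      apply psi0_big; auto. pose proof (NN_grow x Hx L). lia.
    + apply psi0_big; auto; lia.
  - apply psi0_nonneg; auto.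
Qed.

Lemma psi0_anti (x : R) : irrational x -> forall L1 L2,
  (L1 <= L2)%nat -> psi0 x L2 <= psi0 x L1.
Proof.
  intros Hx L1 L2 h. induction h.
  - lra.
  - eapply Rle_trans; [apply psi0_step; auto| auto].
Qed.

Lemma psi0_star (x : R) : irrational x -> forall K, exists L,
  (K <= L)%nat /\ 1 / 2 <= INR (S L) * psi0 x L.
Proof.
  intros Hx K. destruct (balanced x Hx K) as [m [hm hb]].
  pose proof (NN_grow x Hx m).
  exists (NN x m - 1)%nat. split; [lia|].
  replace (S (NN x m - 1)) with (NN x m) by lia.
  eapply Rle_trans; [apply hb|]. apply Rmult_le_compat_l; [apply pos_INR|].
  apply psi0_big; auto; lia.
Qed.

Lemma diverge (f : nat -> R) (c : R) : 0 < c -> (forall n, 0 <= f n) ->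
  (forall n, f (S n) <= f n) ->
  (forall K, exists n, (K <= n)%nat /\ c <= INR (S n) * f n) ->
  forall M, exists N, M < sum_f_R0 (fun k => f (S k)) N.
Proof.
  intros Hc Hpos Hdec Hstar.
  assert (anti : forall a b, (a <= b)%nat -> f b <= f a).
  { intros a b h; induction h; [lra| eapply Rle_trans; [apply Hdec|auto]]. }
  set (g := fun k => f (S k)).
  assert (slb : forall N d, sum_f_R0 g N + INR d * g (N + d)%nat <= sum_f_R0 g (N + d)).
  { intros N d; induction d.
    - rewrite Nat.add_0_r. simpl. lra.
    - replace (N + S d)%nat with (S (N + d)) by lia. simpl sum_f_R0.
      rewrite S_INR. unfold g in *.
      assert (f (S (S (N + d))) <= f (S (N + d))) by apply Hdec.
      assert (0 <= f (S (S (N + d)))) by apply Hpos.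
      assert (0 <= INR d) by apply pos_INR. nra. }
  assert (it : forall j : nat, exists N, INR j * (c / 4) <= sum_f_R0 g N).
  { intro j; induction j.
    - exists 0%nat. simpl. unfold g. pose proof (Hpos 1%nat). lra.
    - destruct IHj as [N hN]. destruct (Hstar (2 * N + 4)%nat) as [n [hn hc]].
      exists (n - 1)%nat.
      pose proof (slb N (n - 1 - N)%nat) as h.
      replace (N + (n - 1 - N))%nat with (n - 1)%nat in h by lia.
      unfold g in h. replace (S (n - 1)) with n in h by lia.
      rewrite minus_INR in h by lia. rewrite minus_INR in h by lia.
      rewrite S_INR in *. simpl (INR 1) in h.
      assert (e : 2 * INR N + 4 <= INR n).
      { replace (2 * INR N + 4) with (INR (2 * N + 4)).
        - apply le_INR; auto.
        - rewrite plus_INR, mult_INR. simpl. ring. }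
      pose proof (Hpos n). change (fun k => f (S k)) with g in h.
      replace (INR 0 + 1) with 1 in h by (simpl; ring).
      assert ((INR n + 1) / 4 * f n <= (INR n - 1 - INR N) * f n)
        by (pose proof (pos_INR N); apply Rmult_le_compat_r; lra).
      lra. }
  intros M. destruct (nat_arch (4 * M / c)) as [j hj]. destruct (it j) as [N hN].
  exists N. eapply Rlt_le_trans; [|apply hN].
  replace M with (4 * M / c * (c / 4)) by (field; lra).
  apply Rmult_lt_compat_r; lra.
Qed.

Lemma distZ_near (t e : R) : distZ t < e -> exists k : Z, Rabs (t - IZR k) < e.
Proof.
  intros h. destruct (base_Int_part t) as [h1 h2]. unfold distZ, Rmin in h.
  destruct Rle_dec.
  - exists (Int_part t). rewrite Rabs_pos_eq; lra.
  - exists (Int_part t + 1)%Z. rewrite plus_IZR. rewrite Rabs_left; lra.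
Qed.

Lemma distZ_le (t : R) (z : Z) : distZ t <= Rabs (t - IZR z).
Proof.
  destruct (base_Int_part t) as [h1 h2]. unfold distZ.
  destruct (Z_le_gt_dec z (Int_part t)) as [hz|hz].
  - apply IZR_le in hz. eapply Rle_trans; [apply Rmin_l|]. rewrite Rabs_pos_eq; lra.
  - assert (hz' : (Int_part t + 1 <= z)%Z) by lia. apply IZR_le in hz'. rewrite plus_IZR in hz'.
    eapply Rle_trans; [apply Rmin_r|]. rewrite Rabs_left1; lra.
Qed.

Lemma caseA (x y : R) (s K : nat) (Q P : Z) : irrational x -> (1 <= s)%nat ->
  (Z.abs Q <= Z.of_nat K)%Z -> INR s * y = IZR Q * x + IZR P -> ~ in_Pi x y.
Proof.
  intros Hx Hs HQ Hy HPi.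
  assert (HS : 1 <= INR s) by (apply (le_INR 1); lia).
  set (psi := fun n : nat => psi0 x (s * (n + K)) / INR s).
  assert (Hinv : 0 < / INR s) by (apply Rinv_0_lt_compat; lra).
  assert (Hnn : forall n, 0 <= psi n).
  { intros n. unfold psi, Rdiv. apply Rmult_le_pos; [apply psi0_nonneg; auto| lra]. }
  assert (Hdec : forall n, psi (S n) <= psi n).
  { intros n. unfold psi, Rdiv. apply Rmult_le_compat_r; [lra|]. apply psi0_anti; auto. nia. }
  assert (HD : in_D psi).
  { split; [intros; apply Hnn|split; [intros; apply Hdec|]].
    apply (diverge psi (/ (4 * INR s * INR s))); auto.
    - apply Rinv_0_lt_compat. nra.
    - intros K'. destruct (psi0_star x Hx (s * (K' + 2 * K + 2))) as [L [hL hB]].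
      set (t := (L / s)%nat).
      pose proof (Nat.div_mod_eq L s) as hdm. pose proof (Nat.mod_upper_bound L s ltac:(lia)) as hmu.
      fold t in hdm.
      assert (ht1 : (s * t <= L)%nat) by lia.
      assert (ht2 : (L < s * (t + 1))%nat) by lia.
      assert (ht3 : (K' + 2 * K + 2 <= t)%nat) by nia.
      exists (t - K)%nat. split; [lia|].
      unfold psi. replace (s * (t - K + K))%nat with (s * t)%nat by (f_equal; lia).
      set (A := psi0 x (s * t)). set (B := psi0 x L).
      assert (hAB : B <= A) by (apply psi0_anti; auto).
      assert (hB0 : 0 <= B) by (apply psi0_nonneg; auto).
      set (n := (t - K)%nat).
      assert (hn : INR (S L) <= INR s * (2 * (INR n + 1))).
      { assert (INR (S L) <= INR (s * (t + 1))) by (apply le_INR; lia).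
        rewrite mult_INR, plus_INR in H. simpl (INR 1) in H.
        assert (INR t <= 2 * INR n + 1).
        { replace (2 * INR n + 1) with (INR (2 * n + 1)) by (rewrite plus_INR, mult_INR; simpl; ring).
          apply le_INR. unfold n. lia. }
        nra. }
      assert (h2 : 1 / 2 <= INR s * (2 * (INR n + 1)) * B).
      { eapply Rle_trans; [apply hB|]. apply Rmult_le_compat_r; auto. }
      assert (h3 : INR s * (INR n + 1) * B <= INR s * (INR n + 1) * A).
      { apply Rmult_le_compat_l; auto. pose proof (pos_INR n). nra. }
      rewrite S_INR.
      replace ((INR n + 1) * (A / INR s)) with ((4 * INR s * (INR n + 1) * A) * / (4 * INR s * INR s))
        by (field; lra).
      rewrite <- (Rmult_1_l (/ (4 * INR s * INR s))) at 1.
      apply Rmult_le_compat_r; [left; apply Rinv_0_lt_compat; nra|]. nra. }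
  destruct (HPi psi HD (K + 1)%nat) as [n [hn1 [hn2 hd]]].
  destruct (distZ_near _ _ hd) as [k hk].
  set (w := (Z.of_nat s * Z.of_nat n + Q)%Z).
  assert (hw : (1 <= w)%Z) by (unfold w; nia).
  set (L := Z.to_nat w).
  assert (hL : INR L = IZR w) by (unfold L; rewrite INR_IZR_INZ, Z2Nat.id; auto; lia).
  assert (hL1 : (1 <= L)%nat) by (unfold L; lia).
  assert (hL2 : (L <= s * (n + K))%nat) by (unfold L, w; nia).
  pose proof (psi0_gap x Hx L (Z.of_nat s * k - P)%Z hL1) as g.
  pose proof (psi0_anti x Hx L (s * (n + K)) hL2) as g2.
  assert (e : INR L * x - IZR (Z.of_nat s * k - P) = INR s * (INR n * x + y - IZR k)).
  { rewrite hL. unfold w. rewrite minus_IZR, !plus_IZR, !mult_IZR, <- !INR_IZR_INZ.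
    replace (INR s * (INR n * x + y - IZR k)) with (INR s * INR n * x + INR s * y - INR s * IZR k) by ring.
    rewrite Hy. ring. }
  rewrite e, Rabs_mult, Rabs_pos_eq in g by lra.
  unfold psi in hk.
  assert (INR s * Rabs (INR n * x + y - IZR k) < psi0 x (s * (n + K))).
  { apply (Rmult_lt_compat_l (INR s)) in hk; [|lra]. field_simplify in hk; lra. }
  lra.
Qed.

Lemma caseB (x y : R) (t : nat) (r : Z) : irrational y -> (1 <= t)%nat ->
  INR t * x = IZR r -> ~ in_Pi x y.
Proof.
  intros Hy Ht Hx HPi.
  assert (HT : 1 <= INR t) by (apply (le_INR 1); lia).
  set (d := distZ (INR t * y)).
  assert (hd : 0 < d).
  { unfold d, distZ. destruct (base_Int_part (INR t * y)) as [h1 h2].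
    pose proof (irr_nz y Hy t (Int_part (INR t * y)) Ht).
    unfold Rmin; destruct Rle_dec; lra. }
  set (psi := fun _ : nat => d / INR t).
  assert (hp : 0 < d / INR t) by (apply Rdiv_lt_0_compat; lra).
  assert (HD : in_D psi).
  { split; [intros; unfold psi; lra|split; [intros; unfold psi; lra|]].
    apply (diverge psi (d / INR t)); auto.
    - intros; unfold psi; lra.
    - intros; unfold psi; lra.
    - intros K. exists K. split; [lia|]. unfold psi. rewrite S_INR.
      pose proof (pos_INR K). nra. }
  destruct (HPi psi HD 0%nat) as [n [_ [hn hdz]]].
  destruct (distZ_near _ _ hdz) as [k hk]. unfold psi in hk.
  pose proof (distZ_le (INR t * y) (Z.of_nat t * k - Z.of_nat n * r)%Z) as g.
  assert (e : INR t * y - IZR (Z.of_nat t * k - Z.of_nat n * r) = INR t * (INR n * x + y - IZR k)).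
  { rewrite minus_IZR, !mult_IZR, <- !INR_IZR_INZ, <- Hx. ring. }
  rewrite e, Rabs_mult, Rabs_pos_eq in g by lra. fold d in g.
  apply (Rmult_lt_compat_l (INR t)) in hk; [|lra].
  replace (INR t * (d / INR t)) with d in hk by (field; lra). lra.
Qed.

Lemma normZ1 (x : R) (w z : Z) : w <> 0%Z -> IZR w * x = IZR z ->
  exists (t : nat) (r : Z), (1 <= t)%nat /\ INR t * x = IZR r.
Proof.
  intros hw e. destruct (Z_lt_le_dec 0 w) as [h|h].
  - exists (Z.to_nat w), z. split; [lia|]. rewrite INR_IZR_INZ, Z2Nat.id by lia. auto.
  - exists (Z.to_nat (- w)), (- z)%Z. split; [lia|]. rewrite INR_IZR_INZ, Z2Nat.id by lia.
    rewrite !opp_IZR. lra.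
Qed.

Lemma normZ2 (x y : R) (w A B : Z) : w <> 0%Z -> IZR w * y = IZR A * x + IZR B ->
  exists (s : nat) (Q P : Z), (1 <= s)%nat /\ INR s * y = IZR Q * x + IZR P.
Proof.
  intros hw e. destruct (Z_lt_le_dec 0 w) as [h|h].
  - exists (Z.to_nat w), A, B. split; [lia|]. rewrite INR_IZR_INZ, Z2Nat.id by lia. auto.
  - exists (Z.to_nat (- w)), (- A)%Z, (- B)%Z. split; [lia|]. rewrite INR_IZR_INZ, Z2Nat.id by lia.
    rewrite !opp_IZR. lra.
Qed.

Lemma Q2R_0 : Q2R 0 = 0.
Proof. unfold Q2R; simpl. ring. Qed.

Theorem lemma25 (x y : R) :
  Q_lin_dep3 x y -> (irrational x \/ irrational y) -> ~ in_Pi x y.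
Proof.
  intros [a [b [c [Hnz He]]]] Hirr.
  destruct a as [an ad], b as [bn bd], c as [cn cd].
  assert (Pa : IZR (Z.pos ad) <> 0) by (apply not_0_IZR; discriminate).
  assert (Pb : IZR (Z.pos bd) <> 0) by (apply not_0_IZR; discriminate).
  assert (Pc : IZR (Z.pos cd) <> 0) by (apply not_0_IZR; discriminate).
  unfold Q2R in He; simpl in He.
  assert (E : IZR an * IZR (Z.pos bd) * IZR (Z.pos cd) + IZR bn * IZR (Z.pos ad) * IZR (Z.pos cd) * x
              + IZR cn * IZR (Z.pos ad) * IZR (Z.pos bd) * y = 0).
  { replace (IZR an * IZR (Z.pos bd) * IZR (Z.pos cd) + IZR bn * IZR (Z.pos ad) * IZR (Z.pos cd) * x
              + IZR cn * IZR (Z.pos ad) * IZR (Z.pos bd) * y)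
      with (IZR (Z.pos ad) * IZR (Z.pos bd) * IZR (Z.pos cd) *
            (IZR an * / IZR (Z.pos ad) + IZR bn * / IZR (Z.pos bd) * x + IZR cn * / IZR (Z.pos cd) * y))
      by (field; auto).
    rewrite He. ring. }
  destruct (Z.eq_dec cn 0) as [hc|hc].
  - subst cn. destruct (Z.eq_dec bn 0) as [hb|hb].
    + subst bn. exfalso. apply Hnz.
      assert (an = 0%Z).
      { assert (IZR an * IZR (Z.pos bd) * IZR (Z.pos cd) = 0) by lra.
        apply Rmult_integral in H. destruct H as [H|H]; [|contradiction].
        apply Rmult_integral in H. destruct H as [H|H]; [|contradiction].
        apply eq_IZR. auto. }
      subst an. unfold Qeq; simpl. lia.
    + destruct (normZ1 x (bn * Z.pos ad * Z.pos cd) (- (an * Z.pos bd * Z.pos cd))) as [t [r [ht hr]]].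
      * lia.
      * rewrite opp_IZR, !mult_IZR. lra.
      * destruct Hirr as [h|h].
        -- exfalso. apply (irr_nz x h t r ht). lra.
        -- apply (caseB x y t r); auto.
  - destruct (normZ2 x y (cn * Z.pos ad * Z.pos bd) (- (bn * Z.pos ad * Z.pos cd)) (- (an * Z.pos bd * Z.pos cd)))
      as [s [Q [P [hs hy]]]].
    + lia.
    + rewrite !opp_IZR, !mult_IZR. lra.
    + assert (Hx : irrational x).
      { intros [q hq]. destruct Hirr as [h|h]; [apply h; exists q; auto|].
        apply (irr_nz y h (s * Pos.to_nat (Qden q)) (Q * Qnum q + P * Z.pos (Qden q))).
        - pose proof (Pos2Nat.is_pos (Qden q)). nia.
        - rewrite mult_INR, (INR_IZR_INZ (Pos.to_nat _)), positive_nat_Z.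
          rewrite plus_IZR, !mult_IZR.
          assert (IZR (Z.pos (Qden q)) <> 0) by (apply not_0_IZR; discriminate).
          replace (INR s * IZR (Z.pos (Qden q)) * y) with (IZR (Z.pos (Qden q)) * (INR s * y)) by ring.
          rewrite hy, hq. unfold Q2R. field. auto. }
      apply (caseA x y s (Z.to_nat (Z.abs Q)) Q P); auto. lia.
Qed.
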